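(* Let $F$ be an infinite family of index sets linearly ordered by $\subseteq$ such that $I_1\subsetneq I_2$ in $F$ implies $I_2\setminus I_1$ is infinite, and let $\mathcal{T}_F=\{T_I\mid I\in F\}$. Let $J$ be an index set with $T_J\notin\mathcal{T}_F$. Then $T_J\in\mathrm{Cl}_E(\mathcal{T}_F)$ if and only if $J$ is an (upper or lower) accumulation point for some infinite $F'\subseteq F$.
   Context: A predicate symbol $R$ is non-empty for a theory $T$ if $T\vdash\exists\bar x R(\bar x)$, empty otherwise. A complete theory $T$ in a predicate language is language uniform (LU) if for each arity $m$, every permutation of the set of $m$-ary symbols non-empty for $T$ preserves $T$. Let $T_0$ be a complete LU-theory in a relational language $\Sigma_0$, let $n\ge1$, and let $\{R_k\mid k\in I_0\}$, $I_0$ infinite, be the set of $n$-ary symbols of $\Sigma_0$ that are non-empty for $T_0$. Let $\Sigma'=\{R_k\mid k\in I_0\}\cup\{$symbols of $\Sigma_0$ of arity $\neq n\}$. An index set is an infinite $I\subseteq I_0$ with $|I|=|I_0|$ and $|I_0\setminus I|$ equal to the number of $n$-ary symbols of $\Sigma_0$ that are empty for $T_0$. For an index set $I$, $T_I$ is the complete $\Sigma'$-theory axiomatized by the restriction of $T_0$ to the language $\{R_k\mid k\in I\}\cup\{$symbols of arity $\ne n\}$ together with $\{\forall\bar x\neg R_l(\bar x)\mid l\in I_0\setminus I\}$. $E$-closure (over $\Sigma'$): let $E$ be a new binary symbol. The $E$-combination of a family $(\mathcal{A}_i)_i$ of $\Sigma'$-structures with disjoint universes is the $(\Sigma'\cup\{E\})$-structure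 on $\bigcup_iA_i$ with $E$ the equivalence relation whose classes are the $A_i$ and each $R\in\Sigma'$ interpreted as $\bigcup_iR^{\mathcal{A}_i}$. For a set $\mathcal{T}$ of complete $\Sigma'$-theories, $\mathrm{Cl}_E(\mathcal{T})$ is the set of complete theories of the $E$-classes (as induced $\Sigma'$-structures) of structures elementarily equivalent to some $E$-combination of structures whose theories lie in $\mathcal{T}$. For infinite $F'\subseteq F$: $\bigcup F'$ is the upper accumulation point of $F'$ if $\bigcup F'\notin F'$, and $\bigcap F'$ is the lower accumulation point of $F'$ if $\bigcap F'\notin F'$. *)

(* Defs.v *)
From Stdlib Require Import List Arith.
Import ListNotations.
Set Implicit Arguments.

Section FOL.
Variable Sy : Type.
Variable ar : Sy -> nat.

Inductive form : Type :=
| Fatom : Sy -> list nat -> form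
| Feq : nat -> nat -> form
| Fneg : form -> form
| Fand : form -> form -> form
| Fex : nat -> form -> form.

Record structure : Type := Struct { dom : Type; rel : Sy -> list dom -> Prop }.

Definition upd (M : structure) (a : nat -> dom M) (x : nat) (d : dom M) : nat -> dom M :=
  fun y => if Nat.eqb y x then d else a y.

Fixpoint sat (M : structure) (a : nat -> dom M) (p : form) : Prop :=
  match p with
  | Fatom R vs => rel M R (map a vs)
  | Feq x y => a x = a y
  | Fneg q => ~ sat M a q
  | Fand q r => sat M a q /\ sat M a r
  | Fex x q => exists d, sat M (upd M a x d) q
  end.

Fixpoint free (z : nat) (p : form) : Prop :=
  match p with
  | Fatom _ vs => In z vs
  | Feq x y => z = x \/ z = y
  | Fneg q => free z q
  | Fand q r => free z q \/ free z r
  | Fex x q => z <> x /\ free z q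
  end.

Fixpoint in_lang (L : Sy -> Prop) (p : form) : Prop :=
  match p with
  | Fatom R vs => L R /\ length vs = ar R
  | Feq _ _ => True
  | Fneg q => in_lang L q
  | Fand q r => in_lang L q /\ in_lang L r
  | Fex _ q => in_lang L q
  end.

Definition sentence_in (L : Sy -> Prop) (p : form) : Prop :=
  in_lang L p /\ forall z, ~ free z p.

Definition Th (L : Sy -> Prop) (M : structure) : form -> Prop :=
  fun p => sentence_in L p /\ forall a, sat M a p.

(* (semantic) consequence; by Goedel's completeness this is |- *)
Definition entails (T : form -> Prop) (p : form) : Prop :=
  forall M : structure, inhabited (dom M) ->
    (forall q, T q -> forall a, sat M a q) -> forall a, sat M a p.

Definition complete_theory (L : Sy -> Prop) (T : form -> Prop) : Prop :=
  exists M : structure, inhabited (dom M) /\ forall p, T p <-> Th L M p.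

Definition elem_equiv (L : Sy -> Prop) (M N : structure) : Prop :=
  forall p, sentence_in L p -> ((forall a, sat M a p) <-> (forall a, sat N a p)).

Fixpoint ex_vars (xs : list nat) (p : form) : form :=
  match xs with [] => p | x :: xs' => Fex x (ex_vars xs' p) end.

Definition exR (R : Sy) : form := ex_vars (seq 0 (ar R)) (Fatom R (seq 0 (ar R))).

Definition nonempty_for (T : form -> Prop) (R : Sy) : Prop := entails T (exR R).

Fixpoint rename (s : Sy -> Sy) (p : form) : form :=
  match p with
  | Fatom R vs => Fatom (s R) vs
  | Feq x y => Feq x y
  | Fneg q => Fneg (rename s q)
  | Fand q r => Fand (rename s q) (rename s r)
  | Fex x q => Fex x (rename s q)
  end.

Definition bijective (s : Sy -> Sy) : Prop :=
  (forall x y, s x = s y -> x = y) /\ (forall y, exists x, s x = y).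

Definition LU (T : form -> Prop) : Prop :=
  forall (m : nat) (s : Sy -> Sy), bijective s ->
    (forall R, ~ (ar R = m /\ nonempty_for T R) -> s R = R) ->
    (forall R, ar R = m /\ nonempty_for T R -> ar (s R) = m /\ nonempty_for T (s R)) ->
    forall p, T p <-> T (rename s p).

End FOL.

Arguments Fatom {Sy}. Arguments Feq {Sy}. Arguments Fneg {Sy}.
Arguments Fand {Sy}. Arguments Fex {Sy}.

Definition subset {X} (A B : X -> Prop) := forall x, A x -> B x.
Definition setD {X} (A B : X -> Prop) := fun x => A x /\ ~ B x.
Definition ext_eq {X} (A B : X -> Prop) := forall x, A x <-> B x.
Definition infinite {X} (A : X -> Prop) := forall l : list X, exists x, A x /\ ~ In x l.
Definition equipotent {X} (A B : X -> Prop) :=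
  exists f : {x | A x} -> {x | B x},
    (forall u v, f u = f v -> u = v) /\ (forall w, exists u, f u = w).
Definition infinite_family {X} (F : (X -> Prop) -> Prop) :=
  forall l : list (X -> Prop), exists I, F I /\ forall I', In I' l -> ~ ext_eq I I'.
Definition bigcup {X} (F : (X -> Prop) -> Prop) : X -> Prop := fun x => exists I, F I /\ I x.
Definition bigcap {X} (F : (X -> Prop) -> Prop) : X -> Prop := fun x => forall I, F I -> I x.
Definition upper_acc {X} (F : (X -> Prop) -> Prop) (J : X -> Prop) :=
  ext_eq J (bigcup F) /\ ~ (exists I, F I /\ ext_eq I (bigcup F)).
Definition lower_acc {X} (F : (X -> Prop) -> Prop) (J : X -> Prop) :=
  ext_eq J (bigcap F) /\ ~ (exists I, F I /\ ext_eq I (bigcap F)).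

Section Setting.
Variables (S : Type) (ar : S -> nat) (T0 : form S -> Prop) (n : nat).

(* I0 : the n-ary symbols non-empty for T0 (indices identified with symbols) *)
Definition I0 : S -> Prop := fun R => ar R = n /\ nonempty_for ar T0 R.
Definition emptyn : S -> Prop := fun R => ar R = n /\ ~ nonempty_for ar T0 R.
Definition Sigma' : S -> Prop := fun R => I0 R \/ ar R <> n.

Definition is_index (I : S -> Prop) : Prop :=
  subset I I0 /\ infinite I /\ equipotent I I0 /\ equipotent (setD I0 I) emptyn.

Definition LangI (I : S -> Prop) : S -> Prop := fun R => I R \/ ar R <> n.

Definition AxI (I : S -> Prop) : form S -> Prop := fun p =>
  (sentence_in ar (LangI I) p /\ T0 p) \/
  (exists l, I0 l /\ ~ I l /\ p = Fneg (exR ar l)).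

Definition TI (I : S -> Prop) : form S -> Prop := fun p =>
  sentence_in ar Sigma' p /\ entails (AxI I) p.

(* language with the new binary symbol E = None *)
Definition arE (o : option S) : nat := match o with None => 2 | Some R => ar R end.
Definition SigmaE (o : option S) : Prop := match o with None => True | Some R => Sigma' R end.

Definition Ecomb (K : Type) (A : K -> structure S) : structure (option S) :=
  {| dom := {k : K & dom (A k)};
     rel := fun o l => match o with
       | None => match l with [x; y] => projT1 x = projT1 y | _ => False end
       | Some R => exists k (l' : list (dom (A k))),
                     l = map (existT (fun k => dom (A k)) k) l' /\ rel (A k) R l'
       end |}.

Definition Eclass (D : structure (option S)) (c : dom D) : structure S :=
  {| dom := {x : dom D | rel D None [x; c]};
     rel := fun R l => rel D (Some R) (map (@proj1_sig _ _) l) |}.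

Definition ClE (Tset : (form S -> Prop) -> Prop) (T : form S -> Prop) : Prop :=
  exists (K : Type) (A : K -> structure S) (D : structure (option S)) (c : dom D),
    inhabited K /\ (forall k, inhabited (dom (A k))) /\
    (forall k, exists T', Tset T' /\ ext_eq (Th ar Sigma' (A k)) T') /\
    elem_equiv arE SigmaE (Ecomb A) D /\
    ext_eq T (Th ar Sigma' (Eclass D c)).

Definition TF (F : (S -> Prop) -> Prop) : (form S -> Prop) -> Prop :=
  fun T => exists I, F I /\ T = TI I.

End Setting.

(* Main.v *)
Require Import Defs.
From Stdlib Require Import List Arith Lia Classical ClassicalEpsilon FunctionalExtensionality ProofIrrelevance Eqdep.
Import ListNotations.
Set Implicit Arguments.

Section Gen.
Variable Sy : Type.

Fixpoint atoms (p : form Sy) : list (Sy * list nat) :=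
  match p with
  | Fatom R vs => [(R, vs)]
  | Feq _ _ => []
  | Fneg q => atoms q
  | Fand q r => atoms q ++ atoms r
  | Fex _ q => atoms q
  end.

Fixpoint vars (p : form Sy) : list nat :=
  match p with
  | Fatom R vs => vs
  | Feq y z => [y; z]
  | Fneg q => vars q
  | Fand q r => vars q ++ vars r
  | Fex y q => y :: vars q
  end.

Lemma upd_comp (N1 N2 : structure Sy) (h : dom N1 -> dom N2) a x d :
  (fun z => h (upd N1 a x d z)) = upd N2 (fun z => h (a z)) x (h d).
Proof. apply functional_extensionality; intro z; unfold upd; destruct (Nat.eqb z x); auto. Qed.

Lemma sat_iso (N1 N2 : structure Sy) (h : dom N1 -> dom N2) (h' : dom N2 -> dom N1)
  (hh' : forall y, h (h' y) = y) (h'h : forall x, h' (h x) = x) p :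
  (forall R vs, In (R,vs) (atoms p) -> forall l, length l = length vs ->
     (rel N1 R l <-> rel N2 R (map h l))) ->
  forall a, sat N1 a p <-> sat N2 (fun z => h (a z)) p.
Proof.
  induction p; simpl; intros Hat a.
  - replace (map (fun z => h (a z)) l) with (map h (map a l)) by apply map_map.
    apply (Hat s l (or_introl eq_refl)). apply length_map.
  - split; intro E. now rewrite E. rewrite <- (h'h (a n)), <- (h'h (a n0)), E. reflexivity.
  - rewrite IHp; tauto.
  - rewrite IHp1, IHp2; [tauto| |]; intros R vs Hin; apply Hat; auto using in_or_app.
  - split; intros [d Hd].
    + exists (h d). rewrite IHp in Hd by auto. now rewrite upd_comp in Hd.
    + exists (h' d). rewrite IHp by auto. rewrite upd_comp, hh'. exact Hd.
Qed.

Lemma sat_fv (M : structure Sy) p : forall a a', (forall z, free z p -> a z = a' z) ->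
  (sat M a p <-> sat M a' p).
Proof.
  induction p; simpl; intros a a' E.
  - rewrite (map_ext_in a a' l); [tauto|]. intros z Hz; apply E; exact Hz.
  - rewrite (E n), (E n0); auto; tauto.
  - rewrite (IHp a a'); auto; tauto.
  - rewrite (IHp1 a a'), (IHp2 a a'); auto; tauto.
  - assert (K : forall d, sat M (upd M a n d) p <-> sat M (upd M a' n d) p).
    { intro d; apply IHp. intros z Hz; unfold upd; destruct (Nat.eqb_spec z n); auto. }
    split; intros [d Hd]; exists d; apply K; exact Hd.
Qed.

Lemma sat_closed (M : structure Sy) p a a' : (forall z, ~ free z p) -> sat M a p -> sat M a' p.
Proof. intros H; apply sat_fv; intros z Hz; destruct (H z Hz). Qed.

Lemma exvars_intro (M : structure Sy) xs : forall a (b : nat -> dom M) q,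
  (forall z, ~ In z xs -> b z = a z) -> sat M b q -> sat M a (ex_vars xs q).
Proof.
  induction xs as [|x xs IH]; simpl; intros a b q E Hb.
  - rewrite <- (sat_fv M q b a); auto.
  - exists (b x). apply IH with b; auto. intros z Hz. unfold upd.
    destruct (Nat.eqb_spec z x); subst; auto. apply E. intros [|]; auto.
Qed.

Lemma exvars_elim (M : structure Sy) xs : forall a q, sat M a (ex_vars xs q) -> exists b, sat M b q.
Proof.
  induction xs as [|x xs IH]; simpl; intros a q H; eauto.
  destruct H as [d Hd]; eauto.
Qed.

Lemma free_exvars xs : forall z (q : form Sy), free z (ex_vars xs q) -> ~ In z xs /\ free z q.
Proof.
  induction xs as [|x xs IH]; simpl; intros z q H; auto.
  destruct H as [H1 H2]. apply IH in H2. destruct H2. split; auto. intros [|]; auto.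
Qed.

Lemma atoms_exvars xs (q : form Sy) : atoms (ex_vars xs q) = atoms q.
Proof. induction xs; simpl; auto. Qed.

Lemma inlang_exvars ar (L : Sy -> Prop) xs (q : form Sy) : in_lang ar L (ex_vars xs q) <-> in_lang ar L q.
Proof. induction xs; simpl; tauto. Qed.

Lemma exR_closed ar (R : Sy) z : ~ free z (exR ar R).
Proof. unfold exR; intro H. apply free_exvars in H. simpl in H. tauto. Qed.

Lemma exR_sentence ar (L : Sy -> Prop) R : L R -> sentence_in ar L (exR ar R).
Proof.
  intro HL. split. unfold exR. apply inlang_exvars. simpl. split; auto. apply length_seq.
  apply exR_closed.
Qed.

Lemma map_nth_seq' {A} (l : list A) d : map (fun z => nth z l d) (seq 0 (length l)) = l.
Proof.
  induction l as [|x l IH]; simpl; auto. f_equal.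
  rewrite <- seq_shift, map_map. simpl. exact IH.
Qed.

Lemma sat_exR ar (M : structure Sy) a R l : length l = ar R -> rel M R l -> sat M a (exR ar R).
Proof.
  intros Hl Hr. unfold exR.
  apply exvars_intro with (b := fun z => if z <? length l then nth z l (a 0) else a z).
  - intros z Hz. destruct (Nat.ltb_spec z (length l)); auto. exfalso; apply Hz. apply in_seq; lia.
  - simpl. rewrite <- Hl. rewrite (map_ext_in _ (fun z => nth z l (a 0))).
    now rewrite map_nth_seq'. intros z Hz. apply in_seq in Hz. destruct (Nat.ltb_spec z (length l)); [reflexivity|lia].
Qed.

Lemma exR_elim ar (M : structure Sy) a R : sat M a (exR ar R) -> exists l, length l = ar R /\ rel M R l.
Proof.
  unfold exR. intro H. apply exvars_elim in H. destruct H as [b Hb]. simpl in Hb.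
  exists (map b (seq 0 (ar R))). split; auto. rewrite length_map; apply length_seq.
Qed.

Lemma inlang_atoms ar (L : Sy -> Prop) (p : form Sy) : in_lang ar L p -> forall R vs, In (R, vs) (atoms p) -> L R /\ length vs = ar R.
Proof.
  induction p; simpl; intros H R vs Hin.
  - destruct Hin as [E|[]]. inversion E; subst; auto.
  - destruct Hin.
  - auto.
  - apply in_app_or in Hin. destruct H; destruct Hin; eauto.
  - auto.
Qed.

Lemma inlang_ext ar (L L' : Sy -> Prop) p : (forall R, L R -> L' R) -> in_lang ar L p -> in_lang ar L' p.
Proof. intros E; induction p; simpl; firstorder. Qed.

Fixpoint relx (x : nat) (p : form Sy) : form (option Sy) :=
  match p with
  | Fatom R vs => Fatom (Some R) vs
  | Feq y z => Feq y z
  | Fneg q => Fneg (relx x q)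
  | Fand q r => Fand (relx x q) (relx x r)
  | Fex y q => Fex y (Fand (Fatom None [y; x]) (relx x q))
  end.

Lemma free_relx x (p : form Sy) z : free z (relx x p) -> z = x \/ free z p.
Proof.
  induction p; simpl; auto; intros H.
  - destruct H; [destruct (IHp1 H)|destruct (IHp2 H)]; auto.
  - destruct H as [H1 [[H|[H|[]]]|H]]; subst; auto. tauto. destruct (IHp H); auto.
Qed.

Lemma inlang_relx ar x (L : Sy -> Prop) (p : form Sy) : in_lang ar L p ->
  in_lang (fun o => match o with None => 2 | Some R => ar R end)
          (fun o => match o with None => True | Some R => L R end) (relx x p).
Proof. induction p; simpl; tauto. Qed.

Lemma map_inj {A B} (f : A -> B) : (forall u v, f u = f v -> u = v) ->
  forall l1 l2, map f l1 = map f l2 -> l1 = l2.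
Proof.
  intros Hf; induction l1 as [|x l1 IH]; destruct l2 as [|y l2]; simpl; intros H; try discriminate; auto.
  injection H; intros H1 H2. f_equal; auto.
Qed.

Lemma sig_eq {A} (P : A -> Prop) (u v : {x | P x}) : proj1_sig u = proj1_sig v -> u = v.
Proof. destruct u as [u pu], v as [v pv]; simpl; intros E; subst. f_equal; apply proof_irrelevance. Qed.

Lemma relD (D : structure (option Sy)) (c : dom D) x (p : form Sy) :
  ~ In x (vars p) -> forall (b : nat -> dom (Eclass D c)) (a : nat -> dom D),
  a x = c -> (forall z, z <> x -> a z = proj1_sig (b z)) ->
  (sat (Eclass D c) b p <-> sat D a (relx x p)).
Proof.
  induction p; simpl; intros Hx b a Hax Hab.
  - replace (map a l) with (map (@proj1_sig _ _) (map b l)). tauto.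
    rewrite map_map. apply map_ext_in. intros z Hz. symmetry; apply Hab. intro; subst; auto.
  - rewrite (Hab n), (Hab n0) by (intro; subst; auto). split; intro E.
    now rewrite E. now apply sig_eq.
  - rewrite (IHp Hx b a); tauto.
  - rewrite (IHp1 (fun h => Hx (in_or_app _ _ _ (or_introl h))) b a),
            (IHp2 (fun h => Hx (in_or_app _ _ _ (or_intror h))) b a); auto; tauto.
  - assert (Hnx : n <> x) by (intro; subst; auto).
    assert (Hx' : ~ In x (vars p)) by auto.
    assert (E1 : forall e, upd D a n e n = e) by (intro; unfold upd; now rewrite Nat.eqb_refl).
    assert (E2 : forall e, upd D a n e x = c).
    { intro; unfold upd. destruct (Nat.eqb_spec x n); [congruence|auto]. }
    split.
    + intros [d Hd]. exists (proj1_sig d). rewrite E1, E2. split. exact (proj2_sig d).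
      rewrite <- (IHp Hx' (upd (Eclass D c) b n d)); auto.
      intros z Hz. unfold upd. destruct (Nat.eqb_spec z n); auto.
    + intros [e [He Hs]]. rewrite E1, E2 in He. exists (exist _ e He).
      rewrite (IHp Hx' (upd (Eclass D c) b n (exist _ e He)) (upd D a n e)); auto.
      intros z Hz. unfold upd. destruct (Nat.eqb_spec z n); auto.
Qed.

Lemma relE K (A : K -> structure Sy) k x (p : form Sy) :
  ~ In x (vars p) -> (forall R vs, In (R,vs) (atoms p) -> vs <> []) ->
  forall (b : nat -> dom (A k)) (a : nat -> dom (Ecomb A)),
  projT1 (a x) = k -> (forall z, z <> x -> a z = existT _ k (b z)) ->
  (sat (A k) b p <-> sat (Ecomb A) a (relx x p)).
Proof.
  induction p; simpl; intros Hx Hne b a Hax Hab.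
  - assert (Em : map a l = map (existT (fun k => dom (A k)) k) (map b l)).
    { rewrite map_map. apply map_ext_in. intros z Hz. apply Hab. intro; subst; auto. }
    rewrite Em. split.
    + intro H. exists k, (map b l). auto.
    + intros [k' [l' [E H]]]. destruct l as [|v l]. { destruct (Hne s [] (or_introl eq_refl)); auto. }
      destruct l' as [|w l']. discriminate.
      assert (Eh := f_equal (fun l => match l with [] => None | u :: _ => Some (projT1 u) end) E).
      simpl in Eh. injection Eh as Ek. subst k'.
      apply map_inj in E. rewrite E; exact H.
      intros u v' Huv; exact (inj_pairT2 _ _ _ _ _ Huv).
  - rewrite (Hab n), (Hab n0) by (intro; subst; auto). split; intro E.
    now rewrite E. exact (inj_pairT2 _ _ _ _ _ E).
  - rewrite (IHp Hx Hne b a); tauto.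
  - rewrite (IHp1 (fun h => Hx (in_or_app _ _ _ (or_introl h))) (fun R vs h => Hne R vs (in_or_app _ _ _ (or_introl h))) b a),
            (IHp2 (fun h => Hx (in_or_app _ _ _ (or_intror h))) (fun R vs h => Hne R vs (in_or_app _ _ _ (or_intror h))) b a); auto; tauto.
  - assert (Hnx : n <> x) by (intro; subst; auto).
    assert (Hx' : ~ In x (vars p)) by auto.
    assert (E1 : forall e, upd (Ecomb A) a n e n = e) by (intro; unfold upd; now rewrite Nat.eqb_refl).
    assert (E2 : forall e, upd (Ecomb A) a n e x = a x).
    { intro; unfold upd. destruct (Nat.eqb_spec x n); [congruence|auto]. }
    split.
    + intros [d Hd]. exists (existT _ k d). cbn. rewrite E1, E2. split. simpl; auto.
      rewrite <- (IHp Hx' Hne (upd (A k) b n d)); auto. rewrite E2; auto.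
      intros z Hz. unfold upd. destruct (Nat.eqb_spec z n); auto.
    + intros [e [He Hs]]. cbn in He. rewrite E1, E2 in He. destruct e as [k' d]. simpl in He.
      rewrite Hax in He. subst k'. exists d.
      rewrite (IHp Hx' Hne (upd (A k) b n d) (upd (Ecomb A) a n (existT _ k d))); auto.
      rewrite E2; auto.
      intros z Hz. unfold upd. destruct (Nat.eqb_spec z n); auto.
Qed.

End Gen.

Section Comb.
Variable S : Type.
Variable F : (S -> Prop) -> Prop.
Variable HFlin : forall I1 I2, F I1 -> F I2 -> subset I1 I2 \/ subset I2 I1.

Lemma max_in (G : (S -> Prop) -> Prop) (HG : forall I, G I -> F I) I1 I2 :
  G I1 -> G I2 -> exists I, G I /\ subset I1 I /\ subset I2 I.
Proof.
  intros H1 H2. destruct (HFlin (HG _ H1) (HG _ H2)).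
  - exists I2; split; auto; split; auto; intros x; auto.
  - exists I1; split; auto; split; auto; intros x; auto.
Qed.

Lemma min_in (G : (S -> Prop) -> Prop) (HG : forall I, G I -> F I) I1 I2 :
  G I1 -> G I2 -> exists I, G I /\ subset I I1 /\ subset I I2.
Proof.
  intros H1 H2. destruct (HFlin (HG _ H1) (HG _ H2)).
  - exists I1; split; auto; split; auto; intros x; auto.
  - exists I2; split; auto; split; auto; intros x; auto.
Qed.

Variable J : S -> Prop.
Variable HJnot : ~ (exists I, F I /\ ext_eq I J).

Lemma acc_agree F' : subset F' F -> infinite_family F' -> (upper_acc F' J \/ lower_acc F' J) ->
  forall L : list S, exists I, F I /\ forall R, In R L -> (I R <-> J R).
Proof.
  intros HF' Hinf [[HJ _]|[HJ _]] L.
  - assert (K : exists I, F' I /\ forall R, In R L -> J R -> I R).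
    { induction L as [|x L IH].
      - destruct (Hinf []) as [I [HI _]]. exists I; split; [auto|intros R []].
      - destruct IH as [I1 [H1 H1']]. destruct (classic (J x)) as [Jx|nJx].
        + destruct (proj1 (HJ x) Jx) as [I2 [H2 H2x]].
          destruct (max_in F' HF' _ _ H1 H2) as [I [HI [S1 S2]]]. exists I; split; auto.
          intros R [E|Hin] HR. subst; auto. auto.
        + exists I1; split; auto. intros R [E|Hin] HR. subst; contradiction. auto. }
    destruct K as [I [HI HI']]. exists I; split; auto. intros R HR; split; auto.
    intro h. apply HJ. exists I; auto.
  - assert (K : exists I, F' I /\ forall R, In R L -> ~ J R -> ~ I R).
    { induction L as [|x L IH].
      - destruct (Hinf []) as [I [HI _]]. exists I; split; [auto|intros R []].
      - destruct IH as [I1 [H1 H1']]. destruct (classic (J x)) as [Jx|nJx].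
        + exists I1; split; auto. intros R [E|Hin] HR. subst; contradiction. auto.
        + assert (E : exists I2, F' I2 /\ ~ I2 x).
          { apply NNPP; intro C. apply nJx, HJ. intros I2 H2. apply NNPP; intro C2. apply C; eauto. }
          destruct E as [I2 [H2 H2x]].
          destruct (min_in F' HF' _ _ H1 H2) as [I [HI [S1 S2]]]. exists I; split; auto.
          intros R [E|Hin] HR. subst; intro h; apply H2x, S2, h. intro h; apply (H1' R Hin HR), S1, h. }
    destruct K as [I [HI HI']]. exists I; split; auto. intros R HR; split.
    + intro h. apply NNPP; intro C. exact (HI' R HR C h).
    + intro h. exact (proj1 (HJ R) h I HI).
Qed.

Variable HJinf : infinite J.
Variable Agree : forall L : list S, exists I, F I /\ forall R, In R L -> (I R <-> J R).

Lemma dich I : F I -> subset I J \/ subset J I.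
Proof.
  intro HI. apply NNPP; intro C. apply not_or_and in C. destruct C as [C1 C2].
  apply not_all_ex_not in C1. destruct C1 as [a Ha].
  apply not_all_ex_not in C2. destruct C2 as [b Hb].
  destruct (Agree [a; b]) as [I' [HI' HA]].
  assert (Ia : I a) by tauto. assert (nJa : ~ J a) by tauto.
  assert (Jb : J b) by tauto. assert (nIb : ~ I b) by tauto.
  assert (nI'a : ~ I' a) by (rewrite (HA a); simpl; auto).
  assert (I'b : I' b) by (apply (HA b); simpl; auto).
  destruct (HFlin HI HI') as [h|h]; auto.
Qed.

Lemma comb : exists F' : (S -> Prop) -> Prop,
    subset F' F /\ infinite_family F' /\ (upper_acc F' J \/ lower_acc F' J).
Proof.
  set (Below := fun I => F I /\ subset I J).
  set (Above := fun I => F I /\ subset J I).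
  destruct (classic (subset J (bigcup Below))) as [HU|HU].
  - exists Below. split; [intros I [h _]; exact h|]. split.
    + intros l.
      assert (K : exists I, Below I /\ forall I', In I' l -> ~ ext_eq I' J ->
                  exists w, ~ (I' w <-> J w) /\ (J w -> I w)).
      { induction l as [|I' l IH].
        - destruct (HJinf []) as [x [Jx _]]. destruct (HU x Jx) as [I [HI _]].
          exists I; split; auto. intros _ [].
        - destruct IH as [I1 [H1 H1']].
          destruct (classic (ext_eq I' J)) as [E|E].
          + exists I1; split; auto. intros I'' [e|Hin] NE. subst; contradiction. auto.
          + apply not_all_ex_not in E. destruct E as [w Hw].
            destruct (classic (J w)) as [Jw|nJw].
            * destruct (HU w Jw) as [I2 [H2 H2w]].
              destruct (max_in Below (fun I h => proj1 h) _ _ H1 H2) as [I [HI [S1 S2]]].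
              exists I; split; auto. intros I'' [e|Hin] NE.
              -- subst. exists w; split; auto.
              -- destruct (H1' I'' Hin NE) as [w' [A B]]. exists w'; split; auto.
            * exists I1; split; auto. intros I'' [e|Hin] NE.
              -- subst. exists w; split; auto. intro; contradiction.
              -- auto. }
      destruct K as [I [[HI HIJ] HK]]. exists I; split; [split; auto|].
      intros I' Hin E.
      destruct (classic (ext_eq I' J)) as [E'|E'].
      * apply HJnot. exists I; split; auto. intro x. rewrite (E x). apply E'.
      * destruct (HK I' Hin E') as [w [A B]]. apply A. rewrite <- (E w).
        split; auto.
    + left. split.
      * intro x; split; auto. intros [I [[_ h] hx]]; auto.
      * intros [I [[HI HIJ] E]]. apply HJnot. exists I; split; auto.
        intro x. rewrite (E x). split; [intros [I' [[_ h] hx]]; auto|intro h; apply HU; auto].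
  - apply not_all_ex_not in HU. destruct HU as [b Hb].
    assert (Jb : J b) by tauto. assert (nb : ~ bigcup Below b) by tauto. clear Hb.
    assert (Sep : forall a, ~ J a -> exists I, Above I /\ ~ I a).
    { intros a na. destruct (Agree [a; b]) as [I [HI HA]].
      assert (nIa : ~ I a) by (rewrite (HA a); simpl; auto).
      assert (Ib : I b) by (apply (HA b); simpl; auto).
      destruct (dich HI) as [h|h].
      - exfalso; apply nb. exists I; split; auto. split; auto.
      - exists I; split; auto. split; auto. }
    exists Above. split; [intros I [h _]; exact h|]. split.
    + intros l.
      assert (K : exists I, Above I /\ forall I', In I' l -> ~ ext_eq I' J ->
                  exists w, ~ (I' w <-> J w) /\ (~ J w -> ~ I w)).
      { induction l as [|I' l IH].
        - destruct (Agree [b]) as [I [HI HA]].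
          assert (Ib : I b) by (apply (HA b); simpl; auto).
          destruct (dich HI) as [h|h].
          + exfalso; apply nb. exists I; split; auto. split; auto.
          + exists I; split. split; auto. intros _ [].
        - destruct IH as [I1 [H1 H1']].
          destruct (classic (ext_eq I' J)) as [E|E].
          + exists I1; split; auto. intros I'' [e|Hin] NE. subst; contradiction. auto.
          + apply not_all_ex_not in E. destruct E as [w Hw].
            destruct (classic (J w)) as [Jw|nJw].
            * exists I1; split; auto. intros I'' [e|Hin] NE.
              -- subst. exists w; split; auto.
              -- auto.
            * destruct (Sep w nJw) as [I2 [H2 H2w]].
              destruct (min_in Above (fun I h => proj1 h) _ _ H1 H2) as [I [HI [S1 S2]]].
              exists I; split; auto. intros I'' [e|Hin] NE.
              -- subst. exists w; split; auto; intros _ h; apply H2w, S2, h.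
              -- destruct (H1' I'' Hin NE) as [w' [A B]]. exists w'; split; auto;
                 intros C h; apply (B C), S1, h. }
      destruct K as [I [[HI HIJ] HK]]. exists I; split; [split; auto|].
      intros I' Hin E.
      destruct (classic (ext_eq I' J)) as [E'|E'].
      * apply HJnot. exists I; split; auto. intro x. rewrite (E x). apply E'.
      * destruct (HK I' Hin E') as [w [A B]]. apply A. rewrite <- (E w).
        split; auto. intro h. apply NNPP; intro C. exact (B C h).
    + right. split.
      * intro x; split. intros Jx I [_ h]; auto.
        intro h. apply NNPP; intro C. destruct (Sep x C) as [I [HI HIx]]. exact (HIx (h I HI)).
      * intros [I [[HI HIJ] E]]. apply HJnot. exists I; split; auto.
        intro x. rewrite (E x). split.
        -- intro h. apply NNPP; intro C. destruct (Sep x C) as [I' [HI' HIx]]. exact (HIx (h I' HI')).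
        -- intros Jx I' [_ h]; auto.
Qed.

End Comb.

Section Main.
Variables (S : Type) (ar : S -> nat) (T0 : form S -> Prop) (n : nat) (M : structure S).
Variable HM : inhabited (dom M).
Variable HT : forall p, T0 p <-> Th ar (fun _ => True) M p.

Definition MI (I : S -> Prop) : structure S :=
  @Struct S (dom M) (fun R l => rel M R l /\ (ar R = n -> I R)).

Definition bot : form S := Fex 0 (Fneg (Feq 0 0)).

Lemma bot_false (N : structure S) a : ~ sat N a bot.
Proof. simpl. intros [d H]. apply H; reflexivity. Qed.

Fixpoint strip (I : S -> Prop) (p : form S) : form S :=
  match p with
  | Fatom R vs => if excluded_middle_informative (ar R = n -> I R) then Fatom R vs else bot
  | Feq y z => Feq y z
  | Fneg q => Fneg (strip I q)
  | Fand q r => Fand (strip I q) (strip I r)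
  | Fex y q => Fex y (strip I q)
  end.

Lemma strip_free I p z : free z (strip I p) -> free z p.
Proof.
  induction p; simpl; auto.
  - destruct (excluded_middle_informative _); simpl; auto. intros [H1 [H2|H2]]; congruence.
  - intros [|]; auto.
  - intros [? ?]; auto.
Qed.

Lemma strip_atoms I p R vs : In (R, vs) (atoms (strip I p)) -> (ar R = n -> I R) /\ In (R, vs) (atoms p).
Proof.
  induction p; simpl; auto.
  - destruct (excluded_middle_informative _); simpl; [|tauto].
    intros [E|[]]. inversion E; subst; auto.
  - tauto.
  - intros H; apply in_app_or in H; destruct H as [H|H];
    [destruct (IHp1 H)|destruct (IHp2 H)]; split; auto using in_or_app.
Qed.

Lemma strip_lang I (L : S -> Prop) p : in_lang ar L p -> in_lang ar (fun R => L R /\ (ar R = n -> I R)) (strip I p).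
Proof.
  induction p; simpl; auto.
  - destruct (excluded_middle_informative _); simpl; tauto.
  - tauto.
Qed.

Lemma strip_sat I (N : structure S) p :
  (forall R l, I0 ar T0 n R -> ~ I R -> length l = ar R -> ~ rel N R l) ->
  in_lang ar (Sigma' ar T0 n) p -> forall a, sat N a p <-> sat N a (strip I p).
Proof.
  intros HN; induction p; simpl; intros Hl a.
  - destruct (excluded_middle_informative _) as [h|h]; simpl; [tauto|].
    split; [|intro H; destruct (bot_false H)].
    intro Hr. destruct Hl as [[HI0|Hne] Hlen].
    + exfalso. apply (HN s (map a l) HI0).
      * intro HI. apply h; intros _; exact HI.
      * rewrite length_map; auto.
      * exact Hr.
    + exfalso; apply h; intro; contradiction.
  - tauto.
  - rewrite IHp; tauto.
  - rewrite IHp1, IHp2; tauto.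
  - split; intros [d Hd]; exists d; [rewrite <- IHp|rewrite IHp]; auto.
Qed.

Lemma MI_M_iso I (p : form S) :
  (forall R vs, In (R, vs) (atoms p) -> ar R = n -> I R) ->
  forall a, sat (MI I) a p <-> sat M a p.
Proof.
  intros H a. apply (sat_iso (MI I) M (fun x => x) (fun x => x)); auto.
  intros R vs Hin l _. rewrite map_id. simpl. specialize (H R vs Hin). tauto.
Qed.

Lemma T0_model q : T0 q -> forall a, sat M a q.
Proof. intros Hq; apply HT in Hq; apply Hq. Qed.

Lemma I0_exR l : I0 ar T0 n l -> forall a, sat M a (exR ar l).
Proof. intros [_ Hne]. apply Hne; auto. exact T0_model. Qed.

Lemma T0_exR l : I0 ar T0 n l -> T0 (exR ar l).
Proof. intros H. apply HT. split. apply exR_sentence; auto. apply I0_exR; auto. Qed.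

Lemma KL I p : sentence_in ar (Sigma' ar T0 n) p ->
  ((forall a, sat (MI I) a p) <-> entails (AxI ar T0 n I) p).
Proof.
  intros [Hl Hc].
  assert (HMIemp : forall R l, I0 ar T0 n R -> ~ I R -> length l = ar R -> ~ rel (MI I) R l).
  { intros R l [HR _] HnI _ [_ H]. auto. }
  split.
  - intros HMI N HN HAx a.
    assert (Hemp : forall R l, I0 ar T0 n R -> ~ I R -> length l = ar R -> ~ rel N R l).
    { intros R l HR HnI Hlen Hr. assert (Ax : AxI ar T0 n I (Fneg (exR ar R))) by (right; eauto).
      apply (HAx _ Ax a). apply sat_exR with l; auto. }
    apply (strip_sat I N p Hemp Hl). apply (HAx (strip I p)). left.
    assert (Hsl := strip_lang I _ _ Hl).
    assert (Hsc : forall z, ~ free z (strip I p)) by (intros z Hz; apply (Hc z); apply (strip_free I); auto).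
    split.
    + split; auto.
      apply inlang_ext with (2 := Hsl). intros R [_ h]. unfold LangI.
      destruct (classic (ar R = n)); auto.
    + apply HT. split. split; auto. apply inlang_ext with (2 := Hsl); auto.
      intro b. apply (MI_M_iso I (strip I p)).
      * intros R vs Hin. apply (strip_atoms I p R vs Hin).
      * apply (strip_sat I (MI I) p HMIemp Hl). apply HMI.
  - intros Hent a. apply Hent.
    + destruct HM as [m]; exact (inhabits m).
    + intros q [[[Hql Hqc] Hq]|[l [Hl0 [HnI E]]]] b.
      * apply (MI_M_iso I q).
        -- intros R vs Hin Har. destruct (inlang_atoms _ _ _ Hql R vs Hin) as [[h|h] _]; [auto|contradiction].
        -- apply T0_model; auto.
      * subst q. simpl. intro H. apply exR_elim in H. destruct H as [l' [_ [_ H]]].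
        apply HnI, H. apply Hl0.
Qed.

Lemma ThMI I : ext_eq (Th ar (Sigma' ar T0 n) (MI I)) (TI ar T0 n I).
Proof.
  intro p. unfold Th, TI. split; intros [Hs H]; split; auto; apply (KL I Hs); auto.
Qed.



Lemma TI_ext I J : ext_eq I J -> ext_eq (TI ar T0 n I) (TI ar T0 n J).
Proof.
  intros E.
  assert (AE : forall I J, ext_eq I J -> forall q, AxI ar T0 n I q -> AxI ar T0 n J q).
  { clear. intros I J E q [[[Hl Hc] Hq]|[l [H1 [H2 H3]]]].
    - left. split; auto. split; auto. apply inlang_ext with (2 := Hl).
      intros R [h|h]; [left; apply E; auto|right; auto].
    - right. exists l. split; auto. split; auto. intro h; apply H2, E, h. }
  intro p; unfold TI; split; intros [Hs H]; split; auto; intros N HN HAx; apply H; auto;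
  intros q Hq; apply HAx; eapply AE; eauto. intro x; symmetry; apply E.
Qed.

Variable Hn : 1 <= n.

Definition Kt (F : (S -> Prop) -> Prop) := (nat * {I | F I})%type.
Definition setO (F : (S -> Prop) -> Prop) (J : S -> Prop) (o : option (Kt F)) : S -> Prop :=
  match o with None => J | Some k => proj1_sig (snd k) end.
Definition AK (F : (S -> Prop) -> Prop) (k : Kt F) : structure S := MI (proj1_sig (snd k)).
Definition AO (F : (S -> Prop) -> Prop) J (o : option (Kt F)) : structure S := MI (setO J o).

Definition gK (F : (S -> Prop) -> Prop) (i : {I | F I}) (o : option (Kt F)) : Kt F :=
  match o with
  | None => (0, i)
  | Some (m, j) => if excluded_middle_informative (j = i) then (Datatypes.S m, j) else (m, j)
  end.
Definition GK (F : (S -> Prop) -> Prop) (i : {I | F I}) (k : Kt F) : option (Kt F) :=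
  let (m, j) := k in
  if excluded_middle_informative (j = i) then
    match m with 0 => None | Datatypes.S mm => Some (mm, j) end
  else Some (m, j).

Lemma GgK (F : (S -> Prop) -> Prop) (i : {I | F I}) (o : option (Kt F)) : GK i (gK i o) = o.
Proof.
  destruct o as [[m j]|]; simpl.
  - destruct (excluded_middle_informative (j = i)) as [e|e]; simpl;
    destruct (excluded_middle_informative (j = i)); try contradiction; auto.
  - destruct (excluded_middle_informative (i = i)); auto. contradiction.
Qed.

Lemma gGK (F : (S -> Prop) -> Prop) (i : {I | F I}) (k : Kt F) : gK i (GK i k) = k.
Proof.
  destruct k as [m j]; simpl.
  destruct (excluded_middle_informative (j = i)) as [e|e]; simpl.
  - destruct m; simpl. subst; auto.
    destruct (excluded_middle_informative (j = i)); [auto|contradiction].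
  - destruct (excluded_middle_informative (j = i)); [contradiction|auto].
Qed.

Lemma gK_snd (F : (S -> Prop) -> Prop) (i : {I | F I}) (o : option (Kt F)) : match o with None => True | Some k => snd (gK i o) = snd k end.
Proof.
  destruct o as [[m j]|]; simpl; auto.
  destruct (excluded_middle_informative (j = i)); auto.
Qed.

Definition syms (p : form (option S)) : list S :=
  flat_map (fun a => match fst a with Some R => [R] | None => [] end) (atoms p).

Lemma syms_in p R vs : In (Some R, vs) (atoms p) -> In R (syms p).
Proof. intro H. unfold syms. apply in_flat_map. exists (Some R, vs). simpl; auto. Qed.

Lemma Ecomb_equiv F J (i : {I | F I}) (p : form (option S)) :
  (forall R, In R (syms p) -> (proj1_sig i R <-> J R)) ->
  forall a, sat (Ecomb (@AO F J)) a p <->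
    sat (Ecomb (@AK F)) (fun z => existT (fun k => dom (@AK F k)) (gK i (projT1 (a z))) (projT2 (a z))) p.
Proof.
  intros Hag a.
  set (h := fun x : dom (Ecomb (@AO F J)) => existT (fun k => dom (@AK F k)) (gK i (projT1 x)) (projT2 x)).
  set (h' := fun x : dom (Ecomb (@AK F)) => existT (fun o => dom (@AO F J o)) (GK i (projT1 x)) (projT2 x)).
  assert (hh' : forall y, h (h' y) = y).
  { intros [k y]. unfold h, h'; simpl. now rewrite gGK. }
  assert (h'h : forall y, h' (h y) = y).
  { intros [k y]. unfold h, h'; simpl. now rewrite GgK. }
  assert (Hrel : forall R o l, In R (syms p) -> (rel (@AO F J o) R l <-> rel (@AK F (gK i o)) R l)).
  { intros R o l HR. unfold AO, AK, MI; simpl.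
    assert (E : setO J o R <-> proj1_sig (snd (gK i o)) R).
    { destruct o as [k|]; simpl. pose proof (gK_snd i (Some k)) as G; simpl in G. rewrite G. tauto.
      specialize (Hag R HR); tauto. }
    rewrite E; tauto. }
  apply (sat_iso (Ecomb (@AO F J)) (Ecomb (@AK F)) h h' hh' h'h p).
  intros [R|] vs Hin l _.
  - assert (HR : In R (syms p)) by (eapply syms_in; eauto).
    simpl. split.
    + intros [o [l' [E H]]]. exists (gK i o), l'. split.
      * subst l. rewrite map_map. reflexivity.
      * apply Hrel; auto.
    + intros [k [l' [E H]]]. exists (GK i k), l'. split.
      * transitivity (map h' (map h l)).
        { rewrite map_map, (map_ext (fun x => h' (h x)) (fun x => x) h'h), map_id. reflexivity. }
        etransitivity; [exact (f_equal (map h') E)|]. rewrite map_map. reflexivity.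
      * apply Hrel; auto. rewrite gGK. exact H.
  - destruct l as [|x [|y [|z l]]]; simpl; try tauto.
    unfold h. simpl. split; intro E. now rewrite E.
    destruct x as [ox x], y as [oy y]; simpl in *.
    rewrite <- (GgK i ox), <- (GgK i oy), E. reflexivity.
Qed.


Lemma Eclass_equiv (F : (S -> Prop) -> Prop) J (m0 : dom M) p :
  sentence_in ar (Sigma' ar T0 n) p ->
  forall a, sat (MI J) a p <->
    sat (Eclass (Ecomb (@AO F J)) (existT (fun o => dom (@AO F J o)) None m0))
        (fun z => exist _ (existT (fun o => dom (@AO F J o)) None (a z)) eq_refl) p.
Proof.
  intros [Hl _] a.
  set (D := Ecomb (@AO F J)). set (c := existT (fun o => dom (@AO F J o)) None m0).
  set (h := fun y : dom (MI J) => (exist _ (existT (fun o => dom (@AO F J o)) None y) eq_refl : dom (Eclass D c))).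
  set (h' := fun e : dom (Eclass D c) => (projT2 (proj1_sig e) : dom (MI J))).
  assert (hh' : forall e, h (h' e) = e).
  { intros [[o y] pf]. apply sig_eq. unfold h, h'; simpl. simpl in pf. subst o. reflexivity. }
  assert (h'h : forall y, h' (h y) = y) by reflexivity.
  apply (sat_iso (MI J) (Eclass D c) h h' hh' h'h p).
  intros R vs Hin l Hlen.
  destruct (inlang_atoms _ _ _ Hl R vs Hin) as [HS Har].
  simpl. rewrite map_map. simpl. split.
  - intro H. exists None, l. split; auto.
  - intros [o [l' [E H]]]. destruct l as [|x l].
    + destruct l' as [|y l']; [|discriminate].
      assert (ar R <> n) by (simpl in Hlen; lia).
      simpl in H. unfold MI in H; simpl in H. unfold MI; simpl. split; [tauto|]. intro; contradiction.
    + destruct l' as [|y l']; [discriminate|].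
      assert (Eh := f_equal (fun l => match l with [] => None | u :: _ => Some (projT1 u) end) E).
      simpl in Eh. injection Eh as Ek. subst o.
      apply map_inj in E. rewrite E. exact H.
      intros u v Huv; exact (inj_pairT2 _ _ _ _ _ Huv).
Qed.

Lemma if_dir (F : (S -> Prop) -> Prop) J (Hne : exists I, F I)
  (Agree : forall L, exists I, F I /\ forall R, In R L -> (I R <-> J R)) :
  ClE ar T0 n (TF ar T0 n F) (TI ar T0 n J).
Proof.
  destruct HM as [m0]. destruct Hne as [I1 HI1].
  exists (Kt F), (@AK F), (Ecomb (@AO F J)), (existT (fun o => dom (@AO F J o)) None m0).
  split; [exact (inhabits (0, exist _ I1 HI1))|].
  split; [intro k; exact (inhabits m0)|].
  split.
  { intro k. exists (TI ar T0 n (proj1_sig (snd k))). split.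
    - exists (proj1_sig (snd k)). split; auto. exact (proj2_sig (snd k)).
    - apply ThMI. }
  split.
  - intros p [Hl Hc].
    destruct (Agree (syms p)) as [Is [HIs HAg]].
    set (i := exist F Is HIs).
    assert (Hag : forall R, In R (syms p) -> (proj1_sig i R <-> J R)) by exact HAg.
    split.
    + intros H a. apply (Ecomb_equiv i p Hag). apply H.
    + intros H b.
      set (a := fun z => existT (fun o => dom (@AO F J o)) (GK i (projT1 (b z))) (projT2 (b z))).
      assert (Hb := proj1 (Ecomb_equiv i p Hag a) (H a)).
      refine (proj1 (sat_fv _ p _ _ _) Hb).
      intros z _. unfold a; simpl. destruct (b z) as [k y]; simpl. now rewrite gGK.
  - intro p. split.
    + intros Hp. pose proof Hp as [Hs _]. apply ThMI in Hp. destruct Hp as [_ Hp].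
      split; auto. intro e.
      assert (H := proj1 (@Eclass_equiv F J m0 p Hs (fun z => projT2 (proj1_sig (e z)))) (Hp _)).
      refine (proj1 (sat_fv _ p _ _ _) H).
      intros z _. apply sig_eq. simpl. destruct (e z) as [[o y] pf]; simpl in *. subst o. reflexivity.
    + intros [Hs Hp]. apply ThMI. split; auto. intro a.
      apply (@Eclass_equiv F J m0 p Hs a). apply Hp.
Qed.


Definition top : form S := Fneg bot.

Definition lit (J : S -> Prop) (R : S) : form S :=
  if excluded_middle_informative (I0 ar T0 n R) then
    (if excluded_middle_informative (J R) then exR ar R else Fneg (exR ar R))
  else top.

Definition conj (J : S -> Prop) (L : list S) : form S :=
  fold_right (fun R acc => Fand (lit J R) acc) top L.

Lemma top_sat (N : structure S) a : sat N a top.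
Proof. intro H. exact (bot_false H). Qed.

Lemma top_closed z : ~ free z top.
Proof. simpl. intros [H1 [H2|H2]]; congruence. Qed.

Lemma conj_sentence J L : sentence_in ar (Sigma' ar T0 n) (conj J L).
Proof.
  induction L as [|R L IH]; simpl.
  - split. simpl; auto. apply top_closed.
  - destruct IH as [IH1 IH2]. unfold lit.
    destruct (excluded_middle_informative (I0 ar T0 n R)) as [h|h];
    [destruct (excluded_middle_informative (J R))|].
    + destruct (exR_sentence ar (Sigma' ar T0 n) R (or_introl h)) as [A B].
      split. simpl; auto. simpl. intros z [H|H]; [apply (B z)|apply (IH2 z)]; auto.
    + destruct (exR_sentence ar (Sigma' ar T0 n) R (or_introl h)) as [A B].
      split. simpl; auto. simpl. intros z [H|H]; [apply (B z)|apply (IH2 z)]; auto.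
    + split. simpl; auto. simpl. intros z [H|H]; [apply (@top_closed z)|apply (IH2 z)]; auto.
Qed.

Lemma conj_atoms J L R vs : In (R, vs) (atoms (conj J L)) -> vs <> [].
Proof.
  induction L as [|R' L IH]; simpl; [tauto|].
  intro H. apply in_app_or in H. destruct H as [H|H]; auto.
  unfold lit in H. destruct (excluded_middle_informative (I0 ar T0 n R')) as [h|h];
  [destruct (excluded_middle_informative (J R'))|]; simpl in H; try tauto;
    unfold exR in H; rewrite atoms_exvars in H; simpl in H.
  - destruct H as [E|[]]. inversion E; subst. destruct h as [h _]. rewrite h.
    destruct n; [lia|discriminate].
  - destruct H as [E|[]]. inversion E; subst. destruct h as [h _]. rewrite h.
    destruct n; [lia|discriminate].
Qed.

Lemma conj_lit (N : structure S) a J L R : sat N a (conj J L) -> In R L -> sat N a (lit J R).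
Proof.
  induction L as [|R' L IH]; simpl; [tauto|]. intros [H1 H2] [E|Hin]; subst; auto.
Qed.

Lemma conj_TI J L : TI ar T0 n J (conj J L).
Proof.
  split. apply conj_sentence. intros N HN HAx a.
  induction L as [|R L IH]; simpl; [apply top_sat|]. split; auto.
  unfold lit. destruct (excluded_middle_informative (I0 ar T0 n R)) as [h|h];
  [destruct (excluded_middle_informative (J R))|].
  - apply HAx. left. split. apply exR_sentence. left; auto. apply T0_exR; auto.
  - apply HAx. right. exists R; auto.
  - apply top_sat.
Qed.

Lemma lit_agree (A : structure S) I J R b :
  subset I (I0 ar T0 n) -> subset J (I0 ar T0 n) ->
  ext_eq (Th ar (Sigma' ar T0 n) A) (TI ar T0 n I) ->
  sat A b (lit J R) -> (I R <-> J R).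
Proof.
  intros HI HJ HTh. unfold lit.
  destruct (excluded_middle_informative (I0 ar T0 n R)) as [h|h];
  [destruct (excluded_middle_informative (J R)) as [j|j]|].
  - intro Hs. split; auto. intros _. apply NNPP; intro nI.
    assert (T : TI ar T0 n I (Fneg (exR ar R))).
    { split. destruct (exR_sentence ar (Sigma' ar T0 n) R (or_introl h)) as [A1 B1].
      split; auto. intros N HN HAx a. apply HAx. right. exists R; auto. }
    apply HTh in T. destruct T as [_ T]. exact (T b Hs).
  - intro Hs. split; [|tauto]. intro iR. exfalso.
    assert (T : TI ar T0 n I (exR ar R)).
    { split. apply exR_sentence. left; auto.
      intros N HN HAx a. apply HAx. left. split. apply exR_sentence. left; auto. apply T0_exR; auto. }
    apply HTh in T. destruct T as [_ T]. exact (Hs (T b)).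
  - intros _. split; intro H; exfalso; apply h; auto.
Qed.

Lemma in_le_max z l : In z l -> z <= list_max l.
Proof.
  intro H. assert (F := proj1 (list_max_le l (list_max l)) (le_n _)).
  rewrite Forall_forall in F. auto.
Qed.

Lemma onlyif_dir (F : (S -> Prop) -> Prop) J
  (HFidx : forall I, F I -> subset I (I0 ar T0 n)) (HJsub : subset J (I0 ar T0 n))
  (Hcl : ClE ar T0 n (TF ar T0 n F) (TI ar T0 n J)) :
  forall L, exists I, F I /\ forall R, In R L -> (I R <-> J R).
Proof.
  intro L. destruct Hcl as [K [A [D [c [[k0] [HA [HTh [Heq HJ]]]]]]]].
  destruct (HA k0) as [y0].
  set (phi := conj J L).
  set (x := Datatypes.S (list_max (vars phi))).
  assert (Hx : ~ In x (vars phi)) by (intro H; apply in_le_max in H; unfold x in H; lia).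
  assert (Hphic : forall z, ~ free z phi) by apply (conj_sentence J L).
  set (psi := Fex x (relx x phi)).
  assert (Hpsi : sentence_in (arE ar) (SigmaE ar T0 n) psi).
  { split. exact (@inlang_relx S ar x _ _ (proj1 (conj_sentence J L))).
    simpl. intros z [H1 H2]. apply free_relx in H2. destruct H2; [contradiction|]. apply (Hphic z); auto. }
  set (rf := @Fneg (option S) (Fex 0 (Fneg (Fatom None [0;0])))).
  assert (Hrf : sentence_in (arE ar) (SigmaE ar T0 n) rf).
  { split. simpl. auto. simpl. intros z [H1 [H2|[H2|[]]]]; congruence. }
  assert (Hcc : rel D None [c; c]).
  { assert (E1 : forall a, sat (Ecomb A) a rf).
    { intros a. simpl. intros [d Hd]. apply Hd. reflexivity. }
    assert (E2 := proj1 (Heq rf Hrf) E1 (fun _ => c)). clear E1; rename E2 into E1. simpl in E1.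
    apply NNPP; intro C. apply E1. exists c. unfold upd; simpl. exact C. }
  assert (HDpsi : forall a, sat D a psi).
  { intro a. apply (sat_closed _ psi (fun _ => c) a). apply Hpsi.
    simpl. exists c.
    set (b := fun _ : nat => (exist _ c Hcc : dom (Eclass D c))).
    apply (@relD S D c x phi Hx b).
    - unfold upd. now rewrite Nat.eqb_refl.
    - intros z Hz. unfold upd. destruct (Nat.eqb_spec z x); [contradiction|reflexivity].
    - assert (T := conj_TI J L). apply HJ in T. destruct T as [_ T]. apply T. }
  assert (HD2 := proj2 (Heq psi Hpsi) HDpsi). clear HDpsi; rename HD2 into HDpsi.
  specialize (HDpsi (fun _ => existT _ k0 y0)). simpl in HDpsi.
  destruct HDpsi as [[k y] Hd].
  assert (Hd' : sat (Ecomb A) (fun _ => existT _ k y) (relx x phi)).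
  { refine (proj1 (sat_fv _ _ _ _ _) Hd). intros z Hz. apply free_relx in Hz.
    destruct Hz as [Hz|Hz]; [|destruct (Hphic z Hz)]. subst z. unfold upd. now rewrite Nat.eqb_refl. }
  assert (Hk : sat (A k) (fun _ => y) phi).
  { apply (@relE S K A k x phi Hx (conj_atoms J L) (fun _ => y)) in Hd'; auto. }
  destruct (HTh k) as [T' [[I [HI ET]] HT']]. subst T'.
  exists I. split; auto. intros R HR.
  apply (@lit_agree (A k) I J R (fun _ => y) (HFidx I HI) HJsub HT').
  apply conj_lit with L; auto.
Qed.

End Main.



Theorem corollary4p7 (S : Type) (ar : S -> nat) (T0 : form S -> Prop) (n : nat)
  (HT0 : complete_theory ar (fun _ => True) T0) (HLU : LU ar T0)
  (Hn : 1 <= n) (HI0 : infinite (I0 ar T0 n))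
  (F : (S -> Prop) -> Prop)
  (HFidx : forall I, F I -> is_index ar T0 n I)
  (HFinf : infinite_family F)
  (HFlin : forall I1 I2, F I1 -> F I2 -> subset I1 I2 \/ subset I2 I1)
  (HFgap : forall I1 I2, F I1 -> F I2 -> subset I1 I2 -> ~ subset I2 I1 ->
             infinite (setD I2 I1))
  (J : S -> Prop) (HJ : is_index ar T0 n J)
  (HJnot : ~ (exists I, F I /\ ext_eq (TI ar T0 n I) (TI ar T0 n J))) :
  ClE ar T0 n (TF ar T0 n F) (TI ar T0 n J) <->
  exists F' : (S -> Prop) -> Prop,
    subset F' F /\ infinite_family F' /\ (upper_acc F' J \/ lower_acc F' J).
Proof.
  destruct HT0 as [M [HM HT]].
  assert (HJnot' : ~ (exists I, F I /\ ext_eq I J)).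
  { intros [I [HI E]]. apply HJnot. exists I; split; auto. apply TI_ext; auto. }
  assert (HFsub : forall I, F I -> subset I (I0 ar T0 n)) by (intros I HI; apply (HFidx I HI)).
  assert (HJsub : subset J (I0 ar T0 n)) by apply HJ.
  split.
  - intro Hcl.
    assert (Agree := onlyif_dir HM HT Hn HFsub HJsub Hcl).
    apply (comb F HFlin HJnot'); auto. apply HJ.
  - intros [F' [HF' [Hinf Hacc]]].
    assert (Agree := acc_agree HFlin HF' Hinf Hacc).
    apply (if_dir T0 HM HT Hn F J); auto.
    destruct (HFinf []) as [I [HI _]]; eauto.
Qed.
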